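(* Let $x\in\{0,1\}^\infty$ have randomness rate $\tau$ for some constant $\tau>0$, and let $0<\sigma<\tau$. Then for every sufficiently large $n_0$ there is $n_1>n_0$ such that \[K(x(n_0+1:n_1)\mid x(1:n_0))>\sigma(n_1-n_0).\] Furthermore, there is an effective procedure that on input $n_0,\tau,\sigma$ computes such an $n_1$.
   Context: $x(n_1:n_2)$ denotes the substring of bits $n_1$ through $n_2$ of $x$ (bits indexed from 1). $K(u)$ is plain Kolmogorov complexity with respect to a fixed universal machine, and $K(u\mid v)=\min\{|p|: U(p,v)=u\}$ is conditional plain Kolmogorov complexity with respect to a fixed universal conditional machine $U$. A sequence $x$ has randomness rate $\sigma$ if $K(x(1:n))\ge\sigma n$ for all but finitely many $n$. *)

(* Defs.v *)
From mathcomp Require Import all_boot.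
From mathcomp Require Import boolp.
From Stdlib Require Import Reals.

Set Implicit Arguments.
Unset Strict Implicit.
Unset Printing Implicit Defensive.

(* Arguments are lists of nats; out-of-range accesses use default 0.  *)

Inductive code : Type :=
| CZero
| CSucc
| CProj (i : nat)
| CComp (f : code) (gs : list code)
| CPrec (f g : code)
| CMu (f : code).

Inductive eval : code -> list nat -> nat -> Prop :=
| eZero xs : eval CZero xs 0
| eSucc xs : eval CSucc xs (head 0 xs).+1
| eProj i xs : eval (CProj i) xs (nth 0 xs i)
| eComp f gs xs ys y :
    evals gs xs ys -> eval f ys y -> eval (CComp f gs) xs y
| ePrec0 f g xs y : eval f xs y -> eval (CPrec f g) (0 :: xs) y
| ePrecS f g n xs r y :
    eval (CPrec f g) (n :: xs) r -> eval g (n :: r :: xs) y ->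
    eval (CPrec f g) (n.+1 :: xs) y
| eMu f xs y :
    eval f (y :: xs) 0 ->
    (forall z, z < y -> exists w, w <> 0 /\ eval f (z :: xs) w) ->
    eval (CMu f) xs y
with evals : list code -> list nat -> list nat -> Prop :=
| esNil xs : evals nil xs nil
| esCons g gs xs y ys :
    eval g xs y -> evals gs xs ys -> evals (g :: gs) xs (y :: ys).

(* Bijective encoding of binary strings into nat (bijective base 2). *)
Fixpoint enc (s : seq bool) : nat :=
  match s with
  | [::] => 0
  | b :: s' => (enc s').*2 + (1 + b)
  end.

Definition machine1 := seq bool -> option (seq bool).
Definition machine2 := seq bool -> seq bool -> option (seq bool).

Definition pcomputable1 (M : machine1) : Prop :=
  exists c : code, forall p u, M p = Some u <-> eval c [:: enc p] (enc u).

Definition pcomputable2 (M : machine2) : Prop :=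
  exists c : code, forall p v u,
    M p v = Some u <-> eval c [:: enc p; enc v] (enc u).

Definition universal1 (U : machine1) : Prop :=
  pcomputable1 U /\
  forall M, pcomputable1 M -> exists c : nat, forall p u,
    M p = Some u -> exists q, size q <= size p + c /\ U q = Some u.

Definition universal2 (U : machine2) : Prop :=
  pcomputable2 U /\
  forall M, pcomputable2 M -> exists c : nat, forall p v u,
    M p v = Some u -> exists q, size q <= size p + c /\ U q v = Some u.

(* Plain Kolmogorov complexity: minimal program length
   (convention 0 if no program exists; never happens for universal U). *)
Definition K1 (U : machine1) (u : seq bool) : nat :=
  match pselect (exists n, `[< exists p, size p = n /\ U p = Some u >]) with
  | left h => ex_minn h
  | right _ => 0
  end.

Definition K2 (U : machine2) (u v : seq bool) : nat :=
  match pselect (exists n, `[< exists p, size p = n /\ U p v = Some u >]) with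
  | left h => ex_minn h
  | right _ => 0
  end.

(* Infinite binary sequence x : nat -> bool, bit i (1-indexed) is x (i-1).
   sub x n1 n2 = x(n1:n2), the bits n1..n2 (empty if n2 < n1). *)
Definition sub (x : nat -> bool) (n1 n2 : nat) : seq bool :=
  mkseq (fun i => x (n1.-1 + i)) (n2.+1 - n1).

Definition has_rate (U0 : machine1) (x : nat -> bool) (tau : R) : Prop :=
  exists N : nat, forall n : nat, (N <= n)%N ->
    (tau * INR n <= INR (K1 U0 (sub x 1 n)))%R.

(* Main.v *)
Require Import Defs.
From mathcomp Require Import all_boot.
From mathcomp Require Import boolp zify.
From Stdlib Require Import Reals Lra Lia.
Import ssrnat.

Set Implicit Arguments.
Unset Strict Implicit.



Definition totn (n : nat) (c : code) (F : seq nat -> nat) : Prop :=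
  forall xs y, size xs = n -> (eval c xs y <-> y = F xs).

Lemma comp_iff f gs xs y :
  eval (CComp f gs) xs y <-> exists ys, evals gs xs ys /\ eval f ys y.
Proof.
split.
- intro H; inversion H; subst; eauto.
- intros [ys [H1 H2]]; econstructor; eauto.
Qed.

Lemma evals_nil_iff xs ys : evals nil xs ys <-> ys = nil.
Proof. split; [intro H; inversion H; auto | intros ->; constructor]. Qed.

Lemma evals_cons_iff g gs xs ys :
  evals (g :: gs) xs ys <-> exists y ys', ys = y :: ys' /\ eval g xs y /\ evals gs xs ys'.
Proof.
split.
- intro H; inversion H; subst; eauto.
- intros [y [ys' [-> [H1 H2]]]]; constructor; auto.
Qed.

Fixpoint alltot n (gs : seq code) (Gs : seq (seq nat -> nat)) : Prop :=
  match gs, Gs with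
  | [::], [::] => True
  | g :: gs', G :: Gs' => totn n g G /\ alltot n gs' Gs'
  | _, _ => False
  end.

Lemma evals_tot n gs Gs xs ys : size xs = n -> alltot n gs Gs ->
  (evals gs xs ys <-> ys = map (fun G => G xs) Gs).
Proof.
move=> Hs; elim: gs Gs ys => [|g gs IH] [|G Gs] ys //= .
- by move=> _; apply: evals_nil_iff.
- move=> [Hg Hgs]; rewrite evals_cons_iff; split.
  + move=> [y [ys' [-> [H1 H2]]]]. by rewrite (IH Gs ys' Hgs) in H2; rewrite H2 ((Hg xs y Hs).1 H1).
  + move=> ->; exists (G xs), (map (fun G => G xs) Gs); split => //; split.
    * by apply/(Hg _ _ Hs).
    * by apply/(IH Gs _ Hgs).
Qed.

Lemma comp_tot n m f F gs Gs : totn m f F -> alltot n gs Gs -> size Gs = m ->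
  totn n (CComp f gs) (fun xs => F (map (fun G => G xs) Gs)).
Proof.
move=> Hf Hg Hm xs y Hs; rewrite comp_iff; split.
- move=> [ys [H1 H2]]; move: H1; rewrite (@evals_tot n gs Gs xs ys Hs Hg) => E; subst ys.
  by apply/(Hf _ _ _).1 => //; rewrite size_map.
- move=> ->; exists (map (fun G => G xs) Gs); split.
  + by apply/(@evals_tot n gs Gs xs _ Hs Hg).
  + by apply/(Hf _ _ _) => //; rewrite size_map.
Qed.

Fixpoint precF (F G : seq nat -> nat) (k : nat) (xs : seq nat) : nat :=
  match k with
  | 0 => F xs
  | k'.+1 => G (k' :: precF F G k' xs :: xs)
  end.

Lemma prec_tot n f g F G : totn n f F -> totn n.+2 g G ->
  totn n.+1 (CPrec f g) (fun xs => precF F G (head 0 xs) (behead xs)).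
Proof.
move=> Hf Hg [|k xs] y //= /succn_inj Hs; subst n.
elim: k y => [|k IH] y /=.
- split; [intro H; inversion H; subst; apply/(Hf _ _ _); auto
         | move=> H; constructor; apply/(Hf _ _ _); auto].
- split.
  + intro H; inversion H; subst.
    match goal with H1 : eval (CPrec f g) _ ?r |- _ =>
      have Hr := (IH r).1 H1; subst r end.
    by apply/(Hg _ _ _).
  + move=> ->; econstructor; first by apply/IH.
    by apply/(Hg _ _ _).
Qed.

Lemma mu_iff n f F xs y : totn n.+1 f F -> size xs = n ->
  (eval (CMu f) xs y <-> F (y :: xs) = 0 /\ forall z, z < y -> F (z :: xs) <> 0).
Proof.
move=> Hf Hs; split.
- intro H; inversion H; subst; split.
  + by symmetry; apply/(Hf _ _ _) => //=; rewrite Hs.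
  + move=> z Hz; match goal with H3 : forall z, _ -> exists w, _ |- _ =>
      have [w [Hw Hev]] := H3 z Hz end.
    by rewrite -((Hf _ _ _).1 Hev) //= Hs.
- move=> [H0 Hlt]; constructor.
  + by apply/(Hf _ _ _) => //=; rewrite Hs.
  + move=> z Hz; exists (F (z :: xs)); split; first by apply: Hlt.
    by apply/(Hf _ _ _) => //=; rewrite Hs.
Qed.

Lemma totn_ext n c F F' : totn n c F -> (forall xs, size xs = n -> F xs = F' xs) -> totn n c F'.
Proof. move=> H HE xs y Hs; rewrite -HE //; exact: H. Qed.

Lemma proj_tot n i : totn n (CProj i) (fun xs => nth 0 xs i).
Proof. move=> xs y _; split; [intro H; inversion H; auto | move=> ->; constructor]. Qed.
Lemma zero_tot n : totn n CZero (fun _ => 0).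
Proof. move=> xs y _; split; [intro H; inversion H; auto | move=> ->; constructor]. Qed.
Lemma succ_tot n : totn n CSucc (fun xs => (head 0 xs).+1).
Proof. move=> xs y _; split; [intro H; inversion H; auto | move=> ->; constructor]. Qed.
Arguments proj_tot : clear implicits.
Arguments zero_tot : clear implicits.
Arguments succ_tot : clear implicits.



Definition oneC := CComp CSucc [:: CZero].
Lemma oneC_tot n : totn n oneC (fun _ => 1).
Proof.
refine (totn_ext (comp_tot (succ_tot 1) (Gs := [:: fun _ => 0]) _ erefl) _) => //.
by split => //; exact: zero_tot.
Qed.

Definition addc := CPrec (CProj 0) (CComp CSucc [:: CProj 1]).
Lemma add_tot : totn 2 addc (fun xs => nth 0 xs 0 + nth 0 xs 1).
Proof.
have Hg : totn 3 (CComp CSucc [:: CProj 1]) (fun xs => (nth 0 xs 1).+1).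
  refine (totn_ext (comp_tot (succ_tot 1) (Gs:=[:: fun xs => nth 0 xs 1]) _ erefl) _) => //.
  by split => //; exact: proj_tot.
refine (totn_ext (prec_tot (proj_tot 1 0) Hg) _).
case=> [|a [|b [|? ?]]] //= _; elim: a => //= a ->; lia.
Qed.

Definition mulc := CPrec CZero (CComp addc [:: CProj 1; CProj 2]).
Lemma mul_tot : totn 2 mulc (fun xs => nth 0 xs 0 * nth 0 xs 1).
Proof.
have Hg : totn 3 (CComp addc [:: CProj 1; CProj 2]) (fun xs => nth 0 xs 1 + nth 0 xs 2).
  refine (totn_ext (comp_tot add_tot (Gs:=[:: fun xs => nth 0 xs 1; fun xs => nth 0 xs 2]) _ erefl) _) => //.
  by split; [|split] => //; exact: proj_tot.
refine (totn_ext (prec_tot (zero_tot 1) Hg) _).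
case=> [|a [|b [|? ?]]] //= _; elim: a => //= a ->; lia.
Qed.

Definition predc := CPrec CZero (CProj 0).
Lemma pred_tot : totn 1 predc (fun xs => (nth 0 xs 0).-1).
Proof.
refine (totn_ext (prec_tot (zero_tot 0) (proj_tot 2 0)) _).
by case=> [|a [|? ?]] //= _; case: a.
Qed.

Definition subc := CPrec (CProj 0) (CComp predc [:: CProj 1]).
Lemma sub_tot : totn 2 subc (fun xs => nth 0 xs 1 - nth 0 xs 0).
Proof.
have Hg : totn 3 (CComp predc [:: CProj 1]) (fun xs => (nth 0 xs 1).-1).
  refine (totn_ext (comp_tot pred_tot (Gs:=[:: fun xs => nth 0 xs 1]) _ erefl) _) => //.
  by split => //; exact: proj_tot.
refine (totn_ext (prec_tot (proj_tot 1 0) Hg) _).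
case=> [|a [|b [|? ?]]] //= _; elim: a => //= [|a ->]; lia.
Qed.

Definition parc := CPrec CZero (CComp subc [:: CProj 1; oneC]).
Lemma par_tot : totn 1 parc (fun xs => odd (nth 0 xs 0)).
Proof.
have Hg : totn 2 (CComp subc [:: CProj 1; oneC]) (fun xs => 1 - nth 0 xs 1).
  refine (totn_ext (comp_tot sub_tot (Gs:=[:: fun xs => nth 0 xs 1; fun _ => 1]) _ erefl) _) => //.
  by split; [exact: proj_tot|split => //; exact: oneC_tot].
refine (totn_ext (prec_tot (zero_tot 0) Hg) _).
case=> [|a [|? ?]] //= _; elim: a => //= a ->; by case: (odd a).
Qed.

Definition halfc := CPrec CZero (CComp addc [:: CProj 1; CComp parc [:: CProj 0]]).
Lemma half_tot : totn 1 halfc (fun xs => (nth 0 xs 0)./2).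
Proof.
have Hp : totn 2 (CComp parc [:: CProj 0]) (fun xs => odd (nth 0 xs 0)).
  refine (totn_ext (comp_tot par_tot (Gs:=[:: fun xs => nth 0 xs 0]) _ erefl) _) => //.
  by split => //; exact: proj_tot.
have Hg : totn 2 (CComp addc [:: CProj 1; CComp parc [:: CProj 0]])
   (fun xs => nth 0 xs 1 + odd (nth 0 xs 0)).
  refine (totn_ext (comp_tot add_tot (Gs:=[:: fun xs => nth 0 xs 1; fun xs => odd (nth 0 xs 0) : nat]) _ erefl) _) => //.
  by split; [exact: proj_tot|split => //].
refine (totn_ext (prec_tot (zero_tot 0) Hg) _).
case=> [|a [|? ?]] //= _; elim: a => //= a ->.
by rewrite uphalf_half addnC.
Qed.

Definition shrc := CPrec (CProj 0) (CComp halfc [:: CProj 1]).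
Lemma shr_tot : totn 2 shrc (fun xs => nth 0 xs 1 %/ 2 ^ nth 0 xs 0).
Proof.
have Hg : totn 3 (CComp halfc [:: CProj 1]) (fun xs => (nth 0 xs 1)./2).
  refine (totn_ext (comp_tot half_tot (Gs:=[:: fun xs => nth 0 xs 1]) _ erefl) _) => //.
  by split => //; exact: proj_tot.
refine (totn_ext (prec_tot (proj_tot 1 0) Hg) _).
case=> [|a [|b [|? ?]]] //= _; elim: a => /= [|a ->]; first by rewrite divn1.
by rewrite -divn2 -divnMA -expnSr.
Qed.

Definition pow2c := CPrec oneC (CComp addc [:: CProj 1; CProj 1]).
Lemma pow2_tot : totn 1 pow2c (fun xs => 2 ^ nth 0 xs 0).
Proof.
have Hg : totn 2 (CComp addc [:: CProj 1; CProj 1]) (fun xs => nth 0 xs 1 + nth 0 xs 1).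
  refine (totn_ext (comp_tot add_tot (Gs:=[:: fun xs => nth 0 xs 1; fun xs => nth 0 xs 1]) _ erefl) _) => //.
  by split; [|split] => //; exact: proj_tot.
refine (totn_ext (prec_tot (@oneC_tot 0) Hg) _).
case=> [|a [|? ?]] //= _; elim: a => //= a ->.
by rewrite expnS mul2n addnn.
Qed.

Definition bitc := CComp parc [:: shrc].
Lemma bit_tot : totn 2 bitc (fun xs => odd (nth 0 xs 1 %/ 2 ^ nth 0 xs 0)).
Proof.
refine (totn_ext (comp_tot par_tot (Gs:=[:: fun xs => nth 0 xs 1 %/ 2 ^ nth 0 xs 0]) _ erefl) _) => //.
by split => //; exact: shr_tot.
Qed.

Lemma tz_ex N : exists z, ~~ odd (N %/ 2 ^ z).
Proof. exists N; rewrite divn_small //; exact: ltn_expl. Qed.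

Definition tz N := ex_minn (tz_ex N).

Definition tzc := CMu bitc.
Lemma tz_tot : totn 1 tzc (fun xs => tz (nth 0 xs 0)).
Proof.
case=> [|N [|? ?]] y //= _.
rewrite (mu_iff _ bit_tot) //=.
rewrite /tz; case: ex_minnP => m Hm Hmin; split.
- move=> [H0 Hlt]; apply/eqP; rewrite eqn_leq Hmin; last by move: H0; case: odd.
  rewrite andbT leqNgt; apply/negP => /Hlt; move: Hm; case: odd => //.
- move=> ->; split; first by move: Hm; case: odd.
  move=> z Hz; apply/eqP; apply: contraTneq Hz => Hz.
  rewrite -leqNgt; apply: Hmin; move: Hz; case: odd => //.
Qed.



Fixpoint decf (k n : nat) : seq bool :=
  match k with
  | 0 => [::]
  | k'.+1 => if n is 0 then [::] else (~~ odd n) :: decf k' (n.-1)./2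
  end.
Definition dec n := decf n n.

Lemma enc_decf k n : n <= k -> enc (decf k n) = n.
Proof.
elim: k n => [|k IH] [|n] //= Hn.
rewrite IH; last by rewrite leq_half_double; lia.
have := odd_double_half n; rewrite -!muln2; case: (odd n) => /=; lia.
Qed.

Lemma enc_dec n : enc (dec n) = n.
Proof. exact: enc_decf. Qed.

Lemma enc_inj : injective enc.
Proof.
elim=> [|b s IH] [|c t] //=; try lia.
move=> E; have Ep : odd ((enc s).*2 + (1 + b)) = odd ((enc t).*2 + (1 + c)) by rewrite E.
move: Ep; rewrite !oddD !odd_double /=; case: b E; case: c => //= E _;
  congr cons; apply: IH; lia.
Qed.

Lemma dec_enc s : dec (enc s) = s.
Proof. apply: enc_inj; exact: enc_dec. Qed.

Lemma enc_size_lo s : 2 ^ size s <= (enc s).+1.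
Proof. elim: s => [|b s IH] //=; rewrite expnS; lia. Qed.

Lemma enc_size_hi s : (enc s).+2 <= 2 ^ (size s).+1.
Proof. elim: s => [|b s IH] //=; rewrite expnS; case: b; lia. Qed.

Lemma enc_cat u w : enc (u ++ w) = enc u + 2 ^ size u * enc w.
Proof. elim: u => [|b u IH] /=; first lia. rewrite IH expnS; lia. Qed.

Definition Rf N := N %/ 2 ^ (tz N).+1.
Definition Bf N := Rf N %/ 2 ^ (tz N).+1.
Definition Af N := Rf N - Bf N * 2 ^ (tz N).+1.

Lemma tz_eq m X : tz (X * 2 ^ m.+1 + (2 ^ m).-1) = m.
Proof.
have key : forall j, j <= m ->
   (X * 2 ^ m.+1 + (2 ^ m).-1) %/ 2 ^ j = X * 2 ^ (m - j).+1 + (2 ^ (m - j)).-1.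
  move=> j Hj; have -> : m = (m - j) + j by lia.
  rewrite addnK -addSn !expnD mulnA.
  have Hp : 0 < 2 ^ j by rewrite expn_gt0.
  have Hq : 0 < 2 ^ (m - j) by rewrite expn_gt0.
  set a := 2 ^ (m - j) in Hq *; set b := 2 ^ j in Hp *.
  have -> : (a * b).-1 = (a.-1) * b + b.-1 by nia.
  rewrite addnA -mulnDl divnMDl // divn_small ?addn0 //; lia.
rewrite /tz; case: ex_minnP => k Hk Hmin.
have Hkm : k <= m.
  apply: Hmin; rewrite key // subnn expn0 /= addn0 expn1 muln2 odd_double //.
apply/eqP; rewrite eqn_leq Hkm /= leqNgt; apply/negP => Hlt.
move: Hk; rewrite key ?(ltnW Hlt) //.
have -> : m - k = (m - k).-1.+1 by lia.
rewrite expnS oddD oddM /= expnS.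
have Hq : 0 < 2 ^ (m - k).-1 by rewrite expn_gt0.
set a := 2 ^ (m - k).-1 in Hq *.
have -> : (2 * a).-1 = (a.-1).*2.+1 by rewrite -muln2; lia.
by rewrite /= odd_double !oddM /= andbF.
Qed.

Definition codeN u p :=
  (enc p * 2 ^ (size u).+1 + enc u) * 2 ^ (size u).+1 + (2 ^ (size u)).-1.

Lemma decode u p :
  [/\ tz (codeN u p) = size u, Bf (codeN u p) = enc p & Af (codeN u p) = enc u].
Proof.
rewrite /codeN; set m := size u; set P := 2 ^ m.+1.
set N := (enc p * P + enc u) * P + (2 ^ m).-1.
have HtZ : tz N = m by apply: tz_eq.
have HA : enc u < P by have := enc_size_hi u; rewrite /P /m; lia.
have HP : 0 < P by rewrite expn_gt0.
have HR : Rf N = enc p * P + enc u.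
  rewrite /Rf HtZ -/P /N divnMDl // divn_small ?addn0 //.
  rewrite /P expnS; have : 0 < 2 ^ m by rewrite expn_gt0. lia.
have HB : Bf N = enc p by rewrite /Bf HR HtZ -/P divnMDl // divn_small ?addn0.
split => //; by rewrite /Af HR HB HtZ -/P; lia.
Qed.

Lemma decode_size u p : size (dec (codeN u p)) <= size p + 2 * size u + 3.
Proof.
have Hlo := enc_size_lo (dec (codeN u p)); rewrite enc_dec in Hlo.
have HA := enc_size_hi u; have HB := enc_size_hi p.
rewrite -(@leq_exp2l 2) //; apply: (leq_trans Hlo).
rewrite /codeN in Hlo *; set m := size u in HA Hlo *.
have -> : 2 ^ (size p + 2 * m + 3) = 2 ^ (size p).+1 * 2 ^ m.+1 * 2 ^ m.+1
   by rewrite -!expnD; congr (_ ^ _); lia.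
have H0 : 0 < 2 ^ m by rewrite expn_gt0.
have H1 : (2 ^ m).-1 < 2 ^ m.+1 by rewrite expnS; lia.
set Q := 2 ^ m.+1 in HA H1 *; set Bp := 2 ^ (size p).+1 in HB *.
nia.
Qed.



Definition mSc := CComp CSucc [:: tzc].
Lemma mS_tot : totn 1 mSc (fun xs => (tz (nth 0 xs 0)).+1).
Proof.
refine (totn_ext (comp_tot (succ_tot 1) (Gs := [:: fun xs => tz (nth 0 xs 0)]) _ erefl) _) => //.
by split => //; exact: tz_tot.
Qed.

Definition Rc := CComp shrc [:: mSc; CProj 0].
Lemma R_tot : totn 1 Rc (fun xs => Rf (nth 0 xs 0)).
Proof.
refine (totn_ext (comp_tot shr_tot (Gs := [:: fun xs => (tz (nth 0 xs 0)).+1; fun xs => nth 0 xs 0]) _ erefl) _) => //.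
by split; [exact: mS_tot|split => //; exact: proj_tot].
Qed.

Definition Qc := CComp shrc [:: mSc; Rc].
Lemma Q_tot : totn 1 Qc (fun xs => Bf (nth 0 xs 0)).
Proof.
refine (totn_ext (comp_tot shr_tot (Gs := [:: fun xs => (tz (nth 0 xs 0)).+1; fun xs => Rf (nth 0 xs 0)]) _ erefl) _) => //.
by split; [exact: mS_tot|split => //; exact: R_tot].
Qed.

Definition Pc := CComp pow2c [:: mSc].
Lemma P_tot : totn 1 Pc (fun xs => 2 ^ (tz (nth 0 xs 0)).+1).
Proof.
refine (totn_ext (comp_tot pow2_tot (Gs := [:: fun xs => (tz (nth 0 xs 0)).+1]) _ erefl) _) => //.
by split => //; exact: mS_tot.
Qed.

Definition QPc := CComp mulc [:: Qc; Pc].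
Lemma QP_tot : totn 1 QPc (fun xs => Bf (nth 0 xs 0) * 2 ^ (tz (nth 0 xs 0)).+1).
Proof.
refine (totn_ext (comp_tot mul_tot (Gs := [:: fun xs => Bf (nth 0 xs 0); fun xs => 2 ^ (tz (nth 0 xs 0)).+1]) _ erefl) _) => //.
by split; [exact: Q_tot|split => //; exact: P_tot].
Qed.

Definition Ac := CComp subc [:: QPc; Rc].
Lemma A_tot : totn 1 Ac (fun xs => Af (nth 0 xs 0)).
Proof.
refine (totn_ext (comp_tot sub_tot (Gs := [:: fun xs => Bf (nth 0 xs 0) * 2 ^ (tz (nth 0 xs 0)).+1; fun xs => Rf (nth 0 xs 0)]) _ erefl) _) => //.
by split; [exact: QP_tot|split => //; exact: R_tot].
Qed.

Definition Tc := CComp pow2c [:: tzc].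
Lemma T_tot : totn 1 Tc (fun xs => 2 ^ (tz (nth 0 xs 0))).
Proof.
refine (totn_ext (comp_tot pow2_tot (Gs := [:: fun xs => tz (nth 0 xs 0)]) _ erefl) _) => //.
by split => //; exact: tz_tot.
Qed.

Lemma comp2_iff f g1 g2 xs y :
  eval (CComp f [:: g1; g2]) xs y <->
  exists y1 y2, eval g1 xs y1 /\ eval g2 xs y2 /\ eval f [:: y1; y2] y.
Proof.
rewrite comp_iff; split.
- move=> [ys [H1 H2]]; move: H1 H2; rewrite evals_cons_iff => -[y1 [ys1 [-> [E1 H]]]].
  move: H; rewrite evals_cons_iff => -[y2 [ys2 [-> [E2 H]]]].
  move: H; rewrite evals_nil_iff => -> H2.
  by exists y1, y2.
- move=> [y1 [y2 [E1 [E2 E3]]]]; exists [:: y1; y2]; split => //.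
  by apply/evals_cons_iff; exists y1, [:: y2]; split => //; split => //;
     apply/evals_cons_iff; exists y2, [::]; split => //; split => //; constructor.
Qed.

Definition c1 (cU : code) :=
  CComp addc [:: CComp mulc [:: CComp cU [:: Qc; Ac]; Tc]; Ac].

Lemma c1_iff cU N y :
  eval (c1 cU) [:: N] y <->
  exists W, eval cU [:: Bf N; Af N] W /\ y = W * 2 ^ tz N + Af N.
Proof.
rewrite /c1 comp2_iff; split.
- move=> [y1 [y2 [E1 [E2 E3]]]].
  move: E2; rewrite (@A_tot [:: N] _ erefl) /= => E2; subst y2.
  move: E3; rewrite (@add_tot [:: y1; Af N] _ erefl) /= => E3; subst y.
  move: E1; rewrite comp2_iff => -[w [t [Ew [Et Em]]]].
  move: Et; rewrite (@T_tot [:: N] _ erefl) /= => Et; subst t.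
  move: Em; rewrite (@mul_tot [:: w; 2 ^ tz N] _ erefl) /= => Em; subst y1.
  move: Ew; rewrite comp2_iff => -[a [b [Ea [Eb Ec]]]].
  move: Ea; rewrite (@Q_tot [:: N] _ erefl) /= => Ea; subst a.
  move: Eb; rewrite (@A_tot [:: N] _ erefl) /= => Eb; subst b.
  by exists w.
- move=> [W [HW ->]]; exists (W * 2 ^ tz N), (Af N).
  split; last split.
  + apply comp2_iff; exists W, (2 ^ tz N); split; last split.
    * apply comp2_iff; exists (Bf N), (Af N); split; last split => //.
      - by apply/(@Q_tot [:: N] _ erefl).
      - by apply/(@A_tot [:: N] _ erefl).
    * by apply/(@T_tot [:: N] _ erefl).
    * by apply/(@mul_tot [:: W; 2 ^ tz N] _ erefl).
  + by apply/(@A_tot [:: N] _ erefl).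
  + by apply/(@add_tot [:: W * 2 ^ tz N; Af N] _ erefl).
Qed.

Definition M1 (U : machine2) : machine1 := fun q =>
  match U (dec (Bf (enc q))) (dec (Af (enc q))) with
  | Some w => Some (dec (enc w * 2 ^ tz (enc q) + Af (enc q)))
  | None => None
  end.

Lemma M1_comp U : pcomputable2 U -> pcomputable1 (M1 U).
Proof.
move=> [cU HU]; exists (c1 cU) => q r; rewrite c1_iff /M1; split.
- case E: (U _ _) => [w|] // [<-]; exists (enc w); split.
  + by have := (HU (dec (Bf (enc q))) (dec (Af (enc q))) w).1 E; rewrite !enc_dec.
  + by rewrite enc_dec.
- move=> [W [HW Hr]].
  have := (HU (dec (Bf (enc q))) (dec (Af (enc q))) (dec W)).2.
  rewrite !enc_dec => /(_ HW) ->.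
  by rewrite enc_dec -Hr dec_enc.
Qed.

Lemma M1_spec U u p v : U p u = Some v -> M1 U (dec (codeN u p)) = Some (u ++ v).
Proof.
move=> H; rewrite /M1 enc_dec; have [Ht Hb Ha] := decode u p.
rewrite Hb Ha Ht !dec_enc H; congr Some.
by rewrite -(dec_enc (u ++ v)) enc_cat; congr dec; lia.
Qed.

Lemma K1_le U0 q u : U0 q = Some u -> K1 U0 u <= size q.
Proof.
move=> H; rewrite /K1; case: pselect => [h|hn].
- case: ex_minnP => n _ Hmin; apply: Hmin; apply/asboolP; by exists q.
- exfalso; apply: hn; exists (size q); apply/asboolP; by exists q.
Qed.

Lemma K2_wit U u v : (exists q, U q v = Some u) ->
  exists p, size p = K2 U u v /\ U p v = Some u.
Proof.
move=> [q Hq]; rewrite /K2; case: pselect => [h|hn].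
- case: ex_minnP => n /asboolP [p [Hp1 Hp2]] _; by exists p.
- exfalso; apply: hn; exists (size q); apply/asboolP; by exists q.
Qed.

Lemma univ2_has U : universal2 U -> forall u v, exists q, U q v = Some u.
Proof.
move=> [_ HU] u v.
have Hid : pcomputable2 (fun p (_ : seq bool) => Some p).
  exists (CProj 0) => p w r; split.
  - by case=> ->; constructor.
  - by move=> H; inversion H; subst; rewrite (enc_inj H3).
have [c Hc] := HU _ Hid.
have [q [_ Hq]] := Hc u v u erefl; by exists q.
Qed.

Lemma core U0 U : universal1 U0 -> universal2 U ->
  exists C, forall u v, K1 U0 (u ++ v) <= K2 U v u + 2 * size u + C.
Proof.
move=> [_ HU0] HU.
have [c0 Hc0] := HU0 _ (M1_comp HU.1).
exists (c0 + 3) => u v.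
have [p [Hp1 Hp2]] := K2_wit (univ2_has HU v u).
have [q [Hq1 Hq2]] := Hc0 _ _ (M1_spec Hp2).
have := K1_le Hq2; have := decode_size u p; lia.
Qed.



Lemma INR_muln m n : INR (m * n) = (INR m * INR n)%R.
Proof. rewrite -multE; exact: mult_INR. Qed.
Lemma INR_addn m n : INR (m + n) = (INR m + INR n)%R.
Proof. rewrite -plusE; exact: plus_INR. Qed.

Lemma sub_size x n : size (sub x 1 n) = n.
Proof. by rewrite /sub size_mkseq subn1. Qed.

Lemma sub_cat x n0 n1 : n0 <= n1 -> sub x 1 n1 = sub x 1 n0 ++ sub x n0.+1 n1.
Proof.
move=> H; rewrite /sub /mkseq !subn1 /= subSS.
have -> : n1 = n0 + (n1 - n0) by lia.
rewrite iotaD map_cat addKn add0n; congr (_ ++ _).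
by rewrite -{1}(addn0 n0) iotaDl -map_comp.
Qed.

Lemma key U0 U C x (tau sigma : R) k :
  (forall u v, K1 U0 (u ++ v) <= K2 U v u + 2 * size u + C) ->
  (0 < sigma)%R -> (sigma < tau)%R -> has_rate U0 x tau ->
  (3 <= INR k * (tau - sigma))%R ->
  exists N, forall n0, N <= n0 ->
    (sigma * INR ((k.+1 * n0).+1 - n0) <
     INR (K2 U (sub x n0.+1 (k.+1 * n0).+1) (sub x 1 n0)))%R.
Proof.
move=> Hcore Hs Hst [Nr HNr] Hk.
exists (maxn Nr C.+1) => n0 Hn0.
set n1 := (k.+1 * n0).+1.
have Hn01 : n0 <= n1 by rewrite /n1; lia.
have Hr := HNr n1 (leq_trans (leq_trans (leq_maxl _ _) Hn0) Hn01).
have Hc := Hcore (sub x 1 n0) (sub x n0.+1 n1).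
rewrite -sub_cat // sub_size in Hc.
set K := K2 U (sub x n0.+1 n1) (sub x 1 n0) in Hc *.
have HcR : (INR (K1 U0 (sub x 1 n1)) <= INR K + 2 * INR n0 + INR C)%R.
  have := le_INR _ _ (elimT leP Hc); rewrite !INR_addn /=. lra.
have E1 : n1 - n0 = (k * n0).+1 by rewrite /n1; lia.
rewrite E1 S_INR INR_muln.
have En1 : INR n1 = (INR k * INR n0 + INR n0 + 1)%R by rewrite /n1 S_INR INR_muln S_INR; lra.
rewrite En1 in Hr.
have HC : (INR C + 1 <= INR n0)%R.
  have : C.+1 <= n0 by apply: leq_trans Hn0; exact: leq_maxr.
  move/leP/le_INR; rewrite S_INR; lra.
have H0 : (0 <= INR n0)%R by apply: pos_INR.
have H3 : (3 * INR n0 <= INR k * (tau - sigma) * INR n0)%R by apply: Rmult_le_compat_r.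
have Ht : (0 <= tau * INR n0)%R by apply: Rmult_le_pos; lra.
nra.
Qed.



Definition three := CComp CSucc [:: CComp CSucc [:: oneC]].
Lemma three_tot n : totn n three (fun _ => 3).
Proof.
have H2 : totn n (CComp CSucc [:: oneC]) (fun _ => 2).
  refine (totn_ext (comp_tot (succ_tot 1) (Gs := [:: fun _ => 1]) _ erefl) _) => //.
  by split => //; exact: oneC_tot.
refine (totn_ext (comp_tot (succ_tot 1) (Gs := [:: fun _ => 2]) _ erefl) _) => //.
Qed.

Definition n6 (xs : seq nat) i := nth 0 xs i.

Lemma mul6 g1 g2 G1 G2 : totn 6 g1 G1 -> totn 6 g2 G2 ->
  totn 6 (CComp mulc [:: g1; g2]) (fun xs => G1 xs * G2 xs).
Proof.
move=> H1 H2.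
refine (totn_ext (comp_tot mul_tot (Gs := [:: G1; G2]) _ erefl) _) => //.
all: by split; [|split].
Qed.

Lemma sub6 g1 g2 G1 G2 : totn 6 g1 G1 -> totn 6 g2 G2 ->
  totn 6 (CComp subc [:: g1; g2]) (fun xs => G2 xs - G1 xs).
Proof.
move=> H1 H2.
refine (totn_ext (comp_tot sub_tot (Gs := [:: G1; G2]) _ erefl) _) => //.
all: by split; [|split].
Qed.

Definition gk :=
  CComp subc [:: CComp mulc [:: CProj 0; CComp subc [:: CComp mulc [:: CProj 4; CProj 3];
                                                         CComp mulc [:: CProj 2; CProj 5]]];
                 CComp mulc [:: three; CComp mulc [:: CProj 3; CProj 5]]].

Definition gkF (xs : seq nat) :=
  3 * (n6 xs 3 * n6 xs 5) - n6 xs 0 * (n6 xs 2 * n6 xs 5 - n6 xs 4 * n6 xs 3).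

Lemma gk_tot : totn 6 gk gkF.
Proof.
apply: sub6; apply: mul6; try exact: proj_tot; try exact: three_tot;
  try (apply: sub6; apply: mul6; exact: proj_tot);
  try (apply: mul6; exact: proj_tot).
Qed.

Definition fc := CComp CSucc [:: CComp mulc [:: CComp CSucc [:: CMu gk]; CProj 0]].

Lemma fc_eval n0 a b c d k :
  eval (CMu gk) [:: n0; a; b; c; d] k -> eval fc [:: n0; a; b; c; d] (k.+1 * n0).+1.
Proof.
move=> Hk.
have E1 : eval (CComp CSucc [:: CMu gk]) [:: n0; a; b; c; d] k.+1.
  apply comp_iff; exists [:: k]; split.
  - by constructor => //; constructor.
  - exact: (eSucc [:: k]).
have E2 : eval (CComp mulc [:: CComp CSucc [:: CMu gk]; CProj 0]) [:: n0; a; b; c; d] (k.+1 * n0).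
  apply comp2_iff; exists k.+1, n0; split => //; split.
  - exact: (eProj 0 [:: n0; a; b; c; d]).
  - by apply/(@mul_tot [:: k.+1; n0] _ erefl).
apply comp_iff; exists [:: (k.+1 * n0)]; split.
- by constructor => //; constructor.
- exact: (eSucc [:: k.+1 * n0]).
Qed.


Lemma INR_subn m n : n <= m -> INR (m - n) = (INR m - INR n)%R.
Proof. move=> H; rewrite -minusE; apply: minus_INR; exact/leP. Qed.

Unset Implicit Arguments.

Theorem lemma4p1 (U0 : machine1) (U : machine2) :
  universal1 U0 -> universal2 U ->
  (forall (x : nat -> bool) (tau sigma : R),
      (0 < tau)%R -> (0 < sigma)%R -> (sigma < tau)%R -> has_rate U0 x tau ->
      exists N : nat, forall n0 : nat, (N <= n0)%N ->
        exists n1 : nat, (n0 < n1)%N /\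
          (sigma * INR (n1 - n0) < INR (K2 U (sub x n0.+1 n1) (sub x 1 n0)))%R)
  /\
  (exists f : code,
    forall (x : nat -> bool) (a b c d : nat),
      (0 < b)%N -> (0 < d)%N ->
      (0 < INR c / INR d)%R -> (INR c / INR d < INR a / INR b)%R ->
      has_rate U0 x (INR a / INR b) ->
      exists N : nat, forall n0 : nat, (N <= n0)%N ->
        exists n1 : nat, eval f [:: n0; a; b; c; d] n1 /\ (n0 < n1)%N /\
          (INR c / INR d * INR (n1 - n0) <
             INR (K2 U (sub x n0.+1 n1) (sub x 1 n0)))%R).
Proof.
move=> HU0 HU.
have [C HC] := core HU0 HU.
split.
- move=> x tau sigma Ht Hs Hst Hr.
  have [k Hk] := INR_unbounded (3 / (tau - sigma)).
  have Hp : (0 < tau - sigma)%R by lra.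
  have Hk3 : (3 <= INR k * (tau - sigma))%R.
    have := Rmult_lt_compat_r _ _ _ Hp Hk.
    rewrite /Rdiv Rmult_assoc Rinv_l; lra.
  have [N HN] := key HC Hs Hst Hr Hk3.
  exists N => n0 Hn0; exists (k.+1 * n0).+1; split; [lia | exact: HN].
- exists fc => x a b c d Hb Hd Hc0 Hcd Hr.
  have HbR : (0 < INR b)%R by apply: lt_0_INR; apply/ltP.
  have HdR : (0 < INR d)%R by apply: lt_0_INR; apply/ltP.
  have Hcb : c * b < a * d.
    apply/ltP; apply: INR_lt; rewrite !INR_muln.
    have E : (INR c * INR b = (INR c / INR d) * (INR b * INR d))%R by field; lra.
    have E' : (INR a * INR d = (INR a / INR b) * (INR b * INR d))%R by field; lra.
    rewrite E E'; apply: Rmult_lt_compat_r => //; exact: Rmult_lt_0_compat.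
  have Pex : exists k, 3 * (b * d) - k * (a * d - c * b) == 0.
    exists (3 * (b * d)); rewrite subn_eq0; apply: leq_pmulr; lia.
  set K := ex_minn Pex.
  have [HK1 HK2] : 3 * (b * d) - K * (a * d - c * b) == 0 /\
                   forall z, 3 * (b * d) - z * (a * d - c * b) == 0 -> K <= z.
    by rewrite /K; case: ex_minnP.
  have HKe : forall n0, eval (CMu gk) [:: n0; a; b; c; d] K.
    move=> n0; apply/(mu_iff _ gk_tot) => //; rewrite /gkF /n6 /=; split.
    + exact/eqP.
    + move=> z Hz /eqP Hz0; move: (HK2 z Hz0); lia.
  have HKn : 3 * (b * d) <= K * (a * d - c * b) by rewrite -subn_eq0.
  have Hk3 : (3 <= INR K * (INR a / INR b - INR c / INR d))%R.
    have := le_INR _ _ (elimT leP HKn).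
    rewrite !INR_muln INR_subn ?(ltnW Hcb) // !INR_muln => HR.
    have E : (INR a / INR b - INR c / INR d =
              (INR a * INR d - INR c * INR b) / (INR b * INR d))%R by field; lra.
    rewrite E; apply: (Rmult_le_reg_r (INR b * INR d)); first exact: Rmult_lt_0_compat.
    have E2 : (INR K * ((INR a * INR d - INR c * INR b) / (INR b * INR d)) * (INR b * INR d)
              = INR K * (INR a * INR d - INR c * INR b))%R by field; lra.
    rewrite E2; simpl in HR; lra.
  have [N HN] := key HC Hc0 Hcd Hr Hk3.
  exists N => n0 Hn0; exists (K.+1 * n0).+1; split; first exact: fc_eval.
  split; [lia | exact: HN].
Qed.
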